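(* Let $F=(C_1,\dots,C_m)$ be a flag of almost affine codes of length $n$ over a finite alphabet $A$, and let $r_i$ be the rank function of the matroid associated to $C_i$. Then $(E,\rho_F)$, where $E=\{1,\dots,n\}$ and $\rho_F(X)=\sum_{i=1}^m(-1)^{i+1}r_i(X)$, is a demi-matroid.
   Context: An almost affine code over a finite alphabet $A$ of length $n$ and dimension $k$ is a subset $C\subseteq A^n$ with $|C|=|A|^k$ such that for every $X\subseteq E=\{1,\dots,n\}$, $\log_{|A|}|C_X|$ is a nonnegative integer, where $C_X$ is the projection of $C$ onto the coordinates in $X$; its associated matroid has rank function $r(X)=\log_{|A|}|C_X|$. An almost affine subcode of $C$ is a subset of $C$ that is itself an almost affine code over the same alphabet. A flag of almost affine codes is a sequence $(C_1,\dots,C_m)$ of almost affine codes over the same alphabet and of the same length such that $C_{j+1}$ is an almost affine subcode of $C_j$ for $1\le j\le m-1$. A demi-matroid is a pair $(E,r)$ with $r:2^E\to\mathbb{N}$ satisfying $r(\emptyset)=0$ and $r(X)\le r(X\cup\{x\})\le r(X)+1$ for all $X\subseteq E$, $x\in E$. *)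

(* Defs.v *)
From HB Require Import structures.
From mathcomp Require Import all_boot all_order all_algebra.
Set Implicit Arguments. Unset Strict Implicit. Unset Printing Implicit Defensive.
Import GRing.Theory Num.Theory.

(* Words of length n over the alphabet A, coordinates E = 'I_n (i.e. {1..n}). *)
Definition word (A : finType) (n : nat) := {ffun 'I_n -> A}.

(* Projection C_X of a code onto the coordinates in X: each codeword is
   restricted to X (coordinates outside X are erased to None). *)
Definition proj (A : finType) (n : nat) (C : {set word A n}) (X : {set 'I_n})
  : {set {ffun 'I_n -> option A}} :=
  [set [ffun i => if i \in X then Some (c i) else None] | c : word A n in C].

Definition almost_affine_dim (A : finType) (n k : nat) (C : {set word A n}) : Prop :=
  #|C| = (#|A| ^ k)%N /\ forall X : {set 'I_n}, exists r : nat, #|proj C X| = (#|A| ^ r)%N.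

Definition almost_affine (A : finType) (n : nat) (C : {set word A n}) : Prop :=
  exists k, almost_affine_dim k C.

Definition code_rank (A : finType) (n : nat) (C : {set word A n}) (X : {set 'I_n}) : nat :=
  trunc_log #|A| #|proj C X|.

Definition almost_affine_subcode (A : finType) (n : nat) (D C : {set word A n}) : Prop :=
  [/\ almost_affine C, almost_affine D & D \subset C].

Definition flag (A : finType) (n m : nat) (C : nat -> {set word A n}) : Prop :=
  (forall i, (1 <= i <= m)%N -> almost_affine (C i)) /\
  (forall j, (1 <= j)%N -> (j < m)%N -> almost_affine_subcode (C j.+1) (C j)).

Definition flag_rho (A : finType) (n m : nat) (C : nat -> {set word A n})
  (X : {set 'I_n}) : int :=
  (\sum_(1 <= i < m.+1) (-1) ^+ i.+1 * (code_rank (C i) X)%:Z)%R.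

(* Demi-matroid on E = 'I_n with an integer-valued function that must be
   N-valued (nonnegative). *)
Definition demi_matroid (n : nat) (r : {set 'I_n} -> int) : Prop :=
  [/\ forall X, (0 <= r X)%R,
      r set0 = 0%R &
      forall (X : {set 'I_n}) (x : 'I_n),
        (r X <= r (x |: X))%R /\ (r (x |: X) <= r X + 1)%R].

(* Main.v *)
Require Import Defs.
From HB Require Import structures.
From mathcomp Require Import all_boot all_order all_algebra.
From mathcomp Require Import zify.
Set Implicit Arguments. Unset Strict Implicit. Unset Printing Implicit Defensive.
Import Order.TTheory GRing.Theory Num.Theory.

Section Aux.
Variables (A : finType) (n : nat).

Definition resX (X : {set 'I_n}) (f : {ffun 'I_n -> option A}) : {ffun 'I_n -> option A} :=
  [ffun i => if i \in X then f i else None].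

Lemma proj_res (C : {set word A n}) X x :
  proj C X = resX X @: proj C (x |: X).
Proof.
rewrite /proj -imset_comp; apply: eq_imset => c /=.
apply/ffunP => i; rewrite !ffunE /=; case: (boolP (i \in X)) => // iX.
by rewrite in_setU1 iX orbT.
Qed.

Lemma proj_le (C : {set word A n}) X x :
  #|proj C X| <= #|proj C (x |: X)|.
Proof. by rewrite (proj_res C X x) leq_imset_card. Qed.

Definition pairp (X : {set 'I_n}) (x : 'I_n) (c : word A n) :=
  ([ffun i => if i \in X then Some (c i) else None], c x).

Definition recomb (x : 'I_n) (p : {ffun 'I_n -> option A} * A) : {ffun 'I_n -> option A} :=
  [ffun i => if i == x then Some p.2 else p.1 i].

Lemma proj_ge (C : {set word A n}) X x :
  #|proj C (x |: X)| <= #|A| * #|proj C X|.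
Proof.
have -> : proj C (x |: X) = recomb x @: (pairp X x @: C).
  rewrite /proj -imset_comp; apply: eq_imset => c /=.
  apply/ffunP => i; rewrite !ffunE /= in_setU1.
  by case: eqVneq => [->|] //=; rewrite ffunE.
apply: leq_trans (leq_imset_card _ _) _.
rewrite mulnC -cardsT -(cardsX (proj C X) [set: A]).
apply: subset_leq_card; apply/subsetP => p /imsetP [c cC ->].
by rewrite in_setX in_setT andbT; apply/imsetP; exists c.
Qed.

Lemma proj_sub (D C : {set word A n}) X : D \subset C -> proj D X \subset proj C X.
Proof. by move=> s; apply: imsetS. Qed.

Lemma proj_eq_sub (D C : {set word A n}) X x : D \subset C ->
  #|proj C (x |: X)| = #|proj C X| -> #|proj D (x |: X)| = #|proj D X|.
Proof.
move=> s e.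
have inj : {in proj C (x |: X) &, injective (resX X)}.
  by apply/imset_injP; rewrite -proj_res e.
rewrite (proj_res D X x); apply/esym/eqP/imset_injP.
move=> u v uD vD; apply: inj; by apply: (subsetP (proj_sub _ s)).
Qed.

Lemma proj0_card (C : {set word A n}) : #|proj C set0| <= 1.
Proof.
apply: (@leq_trans #|[set [ffun _ => None : option A]]|); last by rewrite cards1.
apply: subset_leq_card; apply/subsetP => f /imsetP [c _ ->].
by rewrite in_set1; apply/eqP/ffunP => i; rewrite !ffunE in_set0.
Qed.

Lemma rank0 (C : {set word A n}) : code_rank C set0 = 0.
Proof.
rewrite /code_rank; move: (proj0_card C); case: #|_| => [|[|]] //= _.
  by rewrite trunc_log0.
by rewrite trunc_log1.
Qed.

Lemma rank_mono (C : {set word A n}) X x : code_rank C X <= code_rank C (x |: X).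
Proof. exact/leq_trunc_log/proj_le. Qed.

Lemma rank_sub (D C : {set word A n}) X : D \subset C -> code_rank D X <= code_rank C X.
Proof. by move=> s; apply/leq_trunc_log/subset_leq_card/proj_sub. Qed.

Lemma rank_step (C : {set word A n}) X x : 1 < #|A| -> almost_affine C ->
  code_rank C (x |: X) <= (code_rank C X).+1.
Proof.
move=> A1 [k [_ h]]; have [a ea] := h X; have [b eb] := h (x |: X).
have := proj_ge C X x; rewrite /code_rank ea eb !trunc_expnK // -expnS.
by rewrite leq_exp2l.
Qed.

Lemma rank_eq (C : {set word A n}) X x : 1 < #|A| -> almost_affine C ->
  code_rank C (x |: X) = code_rank C X -> #|proj C (x |: X)| = #|proj C X|.
Proof.
move=> A1 [k [_ h]]; have [a ea] := h X; have [b eb] := h (x |: X).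
by rewrite /code_rank ea eb !trunc_expnK // => ->.
Qed.

End Aux.

Lemma alt_sum (a : nat -> int) m :
  (forall i, 0 <= a i)%R -> (forall i, (0 < i)%N -> (i < m)%N -> (a i.+1 <= a i)%R) ->
  (0 <= \sum_(1 <= i < m.+1) (-1) ^+ i.+1 * a i)%R /\
  (\sum_(1 <= i < m.+1) (-1) ^+ i.+1 * a i <= a 1)%R.
Proof.
elim: m a => [|m IH] a h0 hm.
  by rewrite big_geq // lexx h0.
rewrite big_nat_recl // expr2 mulrN1 opprK mul1r.
have -> : (\sum_(1 <= i < m.+1) (-1) ^+ i.+2 * a i.+1 =
   - \sum_(1 <= i < m.+1) (-1) ^+ i.+1 * a i.+1)%R.
  by rewrite -sumrN; apply: eq_bigr => i _; rewrite exprS mulN1r mulNr.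
have [s0 s1] := IH (fun i => a i.+1) (fun i => h0 _) (fun i i0 im => hm i.+1 isT im).
have s1' : (\sum_(1 <= i < m.+1) (-1) ^+ i.+1 * a i.+1 <= a 1)%R.
  case: m IH hm s0 s1 => [|m] _ hm s0 s1.
    by rewrite big_geq // h0.
  exact: le_trans s1 (hm 1%N isT isT).
split; first by rewrite subr_ge0.
by rewrite lerBlDr lerDl.
Qed.

Theorem mainTheorem5 (A : finType) (n m : nat) (C : nat -> {set word A n}) :
  (1 < #|A|)%N -> flag m C -> demi_matroid (flag_rho m C).
Proof.
move=> A1 [hC hS]; split.
- move=> X; rewrite /flag_rho.
  have [] := @alt_sum (fun i => Posz (code_rank (C i) X)) m; last first.
  - by move=> h _; exact: h.
  2: by [].
  move=> i i0 im; rewrite lez_nat; apply: rank_sub.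
  by have [_ _] := hS i i0 im.
- by rewrite /flag_rho big1 // => i _; rewrite rank0 mulr0.
move=> X x.
have -> : (flag_rho m C (x |: X) = flag_rho m C X +
   \sum_(1 <= i < m.+1) (-1) ^+ i.+1 *
       (Posz (code_rank (C i) (x |: X)) - Posz (code_rank (C i) X)))%R.
  rewrite /flag_rho -big_split /=; apply: eq_bigr => i _.
  by rewrite mulrBr addrC subrK.
have := @alt_sum (fun i => Posz (code_rank (C i) (x |: X)) - Posz (code_rank (C i) X))%R m.
case => //.
- by move=> i; rewrite subr_ge0 lez_nat rank_mono.
- move=> i i0 im; have [_ aD sDC] := hS i i0 im.
  have aC : almost_affine (C i) by apply: hC; rewrite i0 ltnW.
  have := rank_mono (C i) X x; rewrite leq_eqVlt => /orP [/eqP e|lt].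
    have := proj_eq_sub sDC (rank_eq A1 aC (esym e)).
    move=> ed; have ed' : code_rank (C i.+1) (x |: X) = code_rank (C i.+1) X.
      by rewrite /code_rank ed.
    by rewrite ed' -e !subrr.
  have := rank_step (C:=C i.+1) X x A1 aD.
  have h1 := rank_mono (C i.+1) X x; have h2 := rank_mono (C i) X x.
  move=> h3; rewrite !subzn // lez_nat.
  move: lt h1 h2 h3; move: (code_rank (C i) X) (code_rank (C i) (x |: X)) (code_rank (C i.+1) X) (code_rank (C i.+1) (x |: X)) => a b c d; lia.
move=> s0 s1; split; first by rewrite lerDl.
rewrite lerD2l; case: m hC hS s0 s1 => [|m] hC hS s0 s1.
  by rewrite big_geq.
apply: le_trans s1 _.
have h3 := rank_step (C:=C 1) X x A1 (hC 1%N isT); have h1 := rank_mono (C 1) X x.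
rewrite subzn // lez_nat.
by move: h1 h3; move: (code_rank (C 1) X) (code_rank (C 1) (x |: X)) => a b; lia.
Qed.
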